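(* Let $G$ be a finite, simple, connected graph and $k\ge 0$. If $G$ contains a $k$-supported cycle, then $W(G)\ge k-4$.
   Context: For a vertex $r$ of $G$ (the root) and $x\in V(G)$, let $\ell_r(x)=d_G(r,x)$. For an integer $n\ge 0$, let $R_r(n)$ be the set of edges $xy\in E(G)$ with $\max\{\ell_r(x),\ell_r(y)\}>n$, and write $x\simeq_n y$ if $x$ and $y$ lie in the same connected component of $(V(G),R_r(n))$ (in particular $x\simeq_n x$). Define $W(r)=\max_{n\ge 0}\max\{d_G(x,y): \ell_r(x)=\ell_r(y)=n,\ x\simeq_n y\}$ and $W(G)=\max_{r\in V(G)}W(r)$. A cycle $C$ in $G$ is $k$-supported if it can be partitioned into three edge-disjoint paths $I_1,I_2,I_3$, with $I_1\cap I_2$, $I_2\cap I_3$, $I_3\cap I_1$ each a single vertex, such that for all $u_i\in V(I_i)$ ($i=1,2,3$), $\max_{i,j} d_G(u_i,u_j)\ge k$. *)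

(* Defs.v *)
From mathcomp Require Import all_boot.
Set Implicit Arguments. Unset Strict Implicit. Unset Printing Implicit Defensive.

Section Graph.
Variables (T : finType) (e : rel T).

Definition simple_graph : Prop := symmetric e /\ irreflexive e.
Definition connected_graph : Prop := forall x y : T, connect e x y.

Fixpoint reach (n : nat) (x y : T) : bool :=
  if n is n'.+1 then reach n' x y || [exists z, reach n' x z && e z y]
  else x == y.

(* graph distance d_G(x,y): least n with a walk of length <= n;
   (in a connected graph this is attained below #|T|) *)
Definition dist (x y : T) : nat := find (fun n => reach n x y) (iota 0 #|T|).

Definition lvl (r x : T) : nat := dist r x.

Definition Rrel (r : T) (n : nat) : rel T :=
  fun x y => e x y && (n < maxn (lvl r x) (lvl r y)).

Definition simn (r : T) (n : nat) (x y : T) : bool := connect (Rrel r n) x y.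

Definition Wr (r : T) : nat :=
  \max_(p : T * T | (lvl r p.1 == lvl r p.2) && simn r (lvl r p.1) p.1 p.2)
     dist p.1 p.2.

Definition WG : nat := \max_(r : T) Wr r.

(* A partition into three edge-disjoint paths pairwise meeting in exactly one
   vertex is given (after rotating c so that I3 and I1 meet at c_0) by
   breakpoints 0 < i < j < m:
     I1 = c_0 .. c_i,  I2 = c_i .. c_j,  I3 = c_j .. c_{m-1}, c_0. *)
Definition is_cycle (c : seq T) : bool := [&& uniq c, 3 <= size c & cycle e c].

Definition arc1 (c : seq T) (i : nat) : seq T := take i.+1 c.
Definition arc2 (c : seq T) (i j : nat) : seq T := drop i (take j.+1 c).
Definition arc3 (c : seq T) (j : nat) : seq T := drop j c ++ take 1 c.

Definition k_supported_cycle (k : nat) (c : seq T) : Prop :=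
  is_cycle c /\
  exists i j : nat, [/\ 0 < i, i < j, j < size c &
    (forall u1 u2 u3 : T, u1 \in arc1 c i -> u2 \in arc2 c i j -> u3 \in arc3 c j ->
      k <= maxn (dist u1 u2) (maxn (dist u2 u3) (dist u1 u3)))].

End Graph.

(* Main.v *)
Require Import Defs.
From mathcomp Require Import all_boot.
Set Implicit Arguments. Unset Strict Implicit. Unset Printing Implicit Defensive.

Section Aux.
Variables (T : finType) (e : rel T).

Lemma reach_S n x y : reach e n x y -> reach e n.+1 x y.
Proof. by move=> H /=; rewrite H. Qed.

Lemma reach_edge n x y z : reach e n x y -> e y z -> reach e n.+1 x z.
Proof. by move=> H1 H2 /=; apply/orP; right; apply/existsP; exists y; rewrite H1. Qed.

Lemma reach_trans m n x y z : reach e m x y -> reach e n y z -> reach e (m + n) x z.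
Proof.
move=> Hm; elim: n z => [|n IH] z /=.
  by move/eqP=> <-; rewrite addn0.
case/orP=> [H|/existsP[w /andP[H1 H2]]]; rewrite addnS.
  exact/reach_S/IH.
exact: reach_edge (IH _ H1) H2.
Qed.

Lemma reach_edge1 x y : e x y -> reach e 1 x y.
Proof. by move=> H; apply: reach_edge H; rewrite /= eqxx. Qed.

Lemma reach_sym : symmetric e -> forall n x y, reach e n x y -> reach e n y x.
Proof.
move=> se; elim=> [|n IH] x y; first by rewrite /= => /eqP ->.
rewrite [reach e n.+1 x y]/=; case/orP=> [H|/existsP[z /andP[H1 H2]]]; first by apply: reach_S; apply: IH.
have H3 : e y z by rewrite se.
by have := reach_trans (reach_edge1 H3) (IH _ _ H1); rewrite add1n.
Qed.

Lemma reach_path x p : path e x p -> reach e (size p) x (last x p).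
Proof.
elim: p x => [|y p IH] x /=; first by rewrite eqxx.
case/andP=> H1 H2; have := reach_trans (reach_edge1 H1) (IH _ H2).
by rewrite add1n.
Qed.

Lemma dist_le n x y : reach e n x y -> dist e x y <= n.
Proof.
move=> H; rewrite leqNgt; apply/negP => Hlt.
have Hs := find_size (fun m => reach e m x y) (iota 0 #|T|).
rewrite size_iota in Hs.
have := before_find 0 Hlt; rewrite nth_iota ?add0n ?H //.
exact: leq_trans Hlt Hs.
Qed.

Lemma dist_reach x y : connected_graph e -> reach e (dist e x y) x y.
Proof.
move=> cg; have := cg x y; case/connectP=> p pp ->.
case: (shortenP pp) => p' pp' up' _.
have Hs : size p' < #|T|.
  have := max_card (mem (x :: p')); by move/card_uniqP: up' => ->.
have Hh : has (fun m => reach e m x (last x p')) (iota 0 #|T|).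
  by apply/hasP; exists (size p'); rewrite ?mem_iota ?add0n // reach_path.
have Hf := Hh; rewrite has_find size_iota in Hf.
by have := nth_find 0 Hh; rewrite nth_iota.
Qed.
End Aux.

Section Aux2.
Variables (T : finType) (e : rel T).
Hypotheses (se : symmetric e) (cg : connected_graph e).

Lemma dist_tri x y z : dist e x z <= dist e x y + dist e y z.
Proof. exact/dist_le/reach_trans/dist_reach/cg/dist_reach. Qed.

Lemma dist_sym x y : dist e y x = dist e x y.
Proof.
by apply/eqP; rewrite eqn_leq !dist_le // reach_sym // dist_reach.
Qed.

Lemma dist_xx x : dist e x x = 0.
Proof. by apply/eqP; rewrite -leqn0 dist_le //= eqxx. Qed.

Lemma dist_edge x y : e x y -> dist e x y <= 1.
Proof. by move=> H; apply/dist_le/reach_edge1. Qed.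

Lemma lvl_adj r a b : e a b -> lvl e r b <= (lvl e r a).+1.
Proof.
move=> H; rewrite /lvl; apply: leq_trans (dist_tri r a b) _.
by rewrite -addn1 leq_add2l dist_edge.
Qed.

Lemma lvl_adj' r a b : e a b -> lvl e r a <= (lvl e r b).+1.
Proof. by move=> H; apply: lvl_adj; rewrite se. Qed.

Lemma lvl_pred r v m : lvl e r v = m.+1 -> exists2 w, e w v & lvl e r w = m.
Proof.
move=> H; have := dist_reach r v cg; rewrite -/(lvl e r v) H /=.
case/orP=> [Hr|/existsP[w /andP[H1 H2]]].
  by have := dist_le Hr; rewrite -/(lvl e r v) H ltnn.
exists w => //; apply/eqP; rewrite eqn_leq dist_le //=.
have := lvl_adj r H2; rewrite H ltnS; exact.
Qed.

Lemma pathA r n x0 s : path e x0 s -> n < lvl e r (last x0 s) ->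
  ((forall v, v \in x0 :: s -> n < lvl e r v) /\ connect (Rrel e r n) x0 (last x0 s)) \/
  exists2 x, x \in x0 :: s & (lvl e r x = n /\ connect (Rrel e r n) x (last x0 s)).
Proof.
elim: s x0 => [|y s IH] x0 /=.
  by move=> _ H; left; split=> // v; rewrite inE => /eqP ->.
case/andP=> H1 H2 H3; case: (IH _ H2 H3) => [[Hall Hc]|[x Hx [Hl Hc]]].
- have Hy := Hall _ (mem_head _ _).
  have He : Rrel e r n x0 y by rewrite /Rrel H1 /= (leq_trans Hy) // leq_maxr.
  case: (ltnP n (lvl e r x0)) => Hx0.
    left; split; last exact: connect_trans (connect1 He) Hc.
    move=> v; rewrite inE; case/orP=> [/eqP ->//|]; exact: Hall.
  right; exists x0; first by rewrite mem_head.
  have Hn : lvl e r x0 = n.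
    by apply/eqP; rewrite eqn_leq Hx0 -ltnS (leq_trans Hy) // lvl_adj.
  by split=> //; apply: connect_trans (connect1 He) Hc.
- by right; exists x => //; rewrite inE Hx orbT.
Qed.

Lemma pathB r n x0 s : path e x0 s -> n < lvl e r x0 ->
  (forall v, v \in x0 :: s -> n < lvl e r v) \/
  exists2 x, x \in x0 :: s & (lvl e r x = n /\ connect (Rrel e r n) x0 x).
Proof.
elim: s x0 => [|y s IH] x0 /=.
  by move=> _ H; left => v; rewrite inE => /eqP ->.
case/andP=> H1 H2 H3.
case: (ltnP n (lvl e r y)) => Hy.
  have He : Rrel e r n x0 y by rewrite /Rrel H1 /= (leq_trans Hy) // leq_maxr.
  case: (IH _ H2 Hy) => [Hall|[x Hx [Hl Hc]]].
    left=> v; rewrite inE; case/orP=> [/eqP ->//|]; exact: Hall.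
  by right; exists x; [rewrite inE Hx orbT | split=> //; apply: connect_trans (connect1 He) Hc].
right; exists y; first by rewrite !inE eqxx orbT.
have Hn : lvl e r y = n.
  by apply/eqP; rewrite eqn_leq Hy -ltnS (leq_trans H3) // lvl_adj'.
split=> //; apply: connect1.
by rewrite /Rrel H1 /= (leq_trans H3) // leq_maxl.
Qed.
End Aux2.

Theorem mainTheorem4 (T : finType) (e : rel T) (k : nat) :
  simple_graph e -> connected_graph e ->
  (exists c : seq T, k_supported_cycle e k c) ->
  k - 4 <= WG e.
Proof.
move=> [se ie] cg [c [/and3P[uc sc cyc] [i [j [i0 ij js H]]]]].
case: (posnP k) => [->//|kpos].
case: c uc sc cyc js H => [//|c0 s] uc sc cyc js H.
have Hc0_1 : c0 \in arc1 (c0::s) i by rewrite /arc1 /= mem_head.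
have Hc0_3 : c0 \in arc3 (c0::s) j by rewrite /arc3 /= mem_cat mem_head orbT.
have Hk2 : forall u, u \in arc2 (c0::s) i j -> k <= lvl e c0 u.
  move=> u Hu; have := H _ _ _ Hc0_1 Hu Hc0_3.
  by rewrite (dist_sym se cg c0 u) (dist_xx e) maxn0 maxnn.
have Hsz : 0 < size (arc2 (c0::s) i j).
  by rewrite /arc2 size_drop size_takel // subn_gt0 ltnS ltnW.
pose P d := has (fun u => lvl e c0 u == d) (arc2 (c0::s) i j).
have exP : exists d, P d.
  exists (lvl e c0 (nth c0 (arc2 (c0::s) i j) 0)); apply/hasP.
  by exists (nth c0 (arc2 (c0::s) i j) 0); rewrite ?mem_nth.
case: (ex_minnP exP) => D /hasP[u2 Hu2 /eqP HD] Hmin.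
have HminD : forall v, v \in arc2 (c0::s) i j -> D <= lvl e c0 v.
  by move=> v Hv; apply: Hmin; apply/hasP; exists v.
have HkD : k <= D by rewrite -HD Hk2.
case: D HD Hmin HminD HkD => [|n] HD _ HminD HkD; first by rewrite leqn0 in HkD; rewrite (eqP HkD) in kpos.
have [q2a [q2b Eq2]] : exists a b, arc2 (c0::s) i j = a ++ u2 :: b.
  have : forall q : seq T, u2 \in q -> exists a b, q = a ++ u2 :: b.
    by move=> q /splitPr[a b]; exists a, b.
  exact.
have Edec : c0 :: s = take i (c0::s) ++ arc2 (c0::s) i j ++ drop j.+1 (c0::s).
  rewrite /arc2 catA -(take_takel (c0::s) (leqW (ltnW ij))).
  by rewrite !cat_take_drop.
case: i i0 ij Hc0_1 H Hk2 Hsz P exP HminD Hu2 Eq2 Edec => [//|i'] _ ij Hc0_1 H Hk2 Hsz P exP HminD Hu2 Eq2 Edec.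
set R := drop j.+1 (c0 :: s).
move: Edec; rewrite Eq2 /= => [[Es]].
have Hl0 : lvl e c0 c0 = 0 by rewrite /lvl (dist_xx e).
move: cyc; rewrite /= Es !rcons_cat -!catA catA cat_path /= => /and3P[P1 P2 P3].
have PB : path e c0 (rcons (take i' s ++ q2a) u2) by rewrite rcons_path P1 P2.
have [[Hall _]|[x Hx [Hlx Hcx]]] := pathA (r := c0) (n := n) cg PB (ltac:(by rewrite last_rcons HD)).
  by have := Hall _ (mem_head _ _); rewrite Hl0.
rewrite last_rcons in Hcx.
have Hx1 : x \in arc1 (c0 :: s) i'.+1.
  move: Hx; rewrite -cats1 -catA -cat_cons mem_cat => /orP[Hx|Hx].
    by rewrite /arc1 -addn1 takeD mem_cat Hx.
  have : x \in arc2 (c0::s) i'.+1 j.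
    by rewrite Eq2 mem_cat inE; move: Hx; rewrite mem_cat inE => /orP[->|->]; rewrite ?orbT.
  by move/HminD; rewrite Hlx ltnn.
have [Hall|[y Hy [Hly Hcy]]] := pathB (r := c0) (n := n) se cg P3 (ltac:(by rewrite HD)).
  by have := Hall c0; rewrite inE mem_cat mem_rcons mem_head !orbT Hl0 => /(_ isT).
have Hy3 : y \in arc3 (c0 :: s) j.
  move: Hy; rewrite inE mem_cat mem_rcons inE.
  case/orP=> [/eqP Hy|/orP[Hy|/orP[/eqP ->//|Hy]]].
  - by have := HminD _ Hu2; rewrite -Hy Hly ltnn.
  - have : y \in arc2 (c0::s) i'.+1 j by rewrite Eq2 mem_cat inE Hy !orbT.
    by move/HminD; rewrite Hly ltnn.
  - by rewrite /arc3 (drop_nth c0 js) mem_cat inE Hy orbT.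
have [w Hw Hlw] := lvl_pred cg HD.
have sR : symmetric (Rrel e c0 n) by move=> a b; rewrite /Rrel se maxnC.
have Hwu : connect (Rrel e c0 n) w u2.
  by apply: connect1; rewrite /Rrel Hw Hlw HD /= (leq_trans (ltnSn n)) // leq_maxr.
have Huw : connect (Rrel e c0 n) u2 w by rewrite sym_connect_sym.
have HW : forall a b, lvl e c0 a = n -> lvl e c0 b = n ->
    connect (Rrel e c0 n) a b -> dist e a b <= WG e.
  move=> a b Ha Hb Hab; apply: leq_trans (leq_bigmax (F := Wr e) c0).
  have := @leq_bigmax_cond _ (fun p : T * T => (lvl e c0 p.1 == lvl e c0 p.2) &&
      simn e c0 (lvl e c0 p.1) p.1 p.2) (fun p => dist e p.1 p.2) (a, b).
  by rewrite /= Ha Hb eqxx /simn Hab; apply.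
have Hxw := HW _ _ Hlx Hlw (connect_trans Hcx Huw).
have Hwy := HW _ _ Hlw Hly (connect_trans Hwu Hcy).
have Hxy := HW _ _ Hlx Hly (connect_trans Hcx Hcy).
have Hd1 : dist e w u2 <= 1 by apply: dist_edge.
have Hd2 : dist e u2 w <= 1 by rewrite (dist_sym se cg w u2).
have := H _ _ _ Hx1 Hu2 Hy3.
have A1 : dist e x u2 <= (WG e).+1.
  apply: leq_trans (dist_tri cg x w u2) _; rewrite -addn1; exact: leq_add.
have A2 : dist e u2 y <= (WG e).+1.
  apply: leq_trans (dist_tri cg u2 w y) _; rewrite -add1n; exact: leq_add.
have A3 : dist e x y <= (WG e).+1 by apply: leq_trans Hxy _.
move=> Hk; have : k <= (WG e).+1.
  by apply: leq_trans Hk _; rewrite !geq_max A1 A2 A3.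
move=> Hk'; rewrite leq_subLR; apply: leq_trans Hk' _; rewrite addnC -addn1 leq_add2l.
by [].
Qed.
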